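(* Let $\phi:M_D(\mathbb{C})\to M_D(\mathbb{C})$ be a primitive unital Schwarz map and $n\in\mathbb{N}$. Then $\mathcal{M}_{\phi^n}=\mathcal{M}_{\phi^{n+1}}$ if and only if $n\ge\kappa(\phi)$.
   Context: $M_D(\mathbb{C})$ is the algebra of complex $D\times D$ matrices. A linear map $\phi$ is a unital Schwarz map if $\phi(I)=I$ and $\phi(a^*a)\ge\phi(a)^*\phi(a)$ for all $a$; it is primitive if some power $\phi^n$ maps every nonzero positive semidefinite matrix to a positive definite matrix. For a unital Schwarz map $\psi$, the multiplicative domain is $\mathcal{M}_\psi=\{a : \psi(a^*a)=\psi(a)^*\psi(a) \text{ and } \psi(aa^* )=\psi(a)\psi(a)^*\}$; for primitive unital Schwarz $\phi$ one has $\mathcal{M}_{\phi^{n+1}}\subseteq\mathcal{M}_{\phi^n}$ for all $n$, and $\kappa(\phi)$ is the minimal $k\in\mathbb{N}$ with $\bigcap_{n}\mathcal{M}_{\phi^n}=\mathcal{M}_{\phi^k}$. *)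

(* Defs.v *)
(* matrices over C := R[i] for an arbitrary R : realType
   (every realType is a model of the reals, so R[i] is a model of C). *)
From mathcomp Require Import all_boot all_algebra.
From mathcomp Require Import reals.
From mathcomp.real_closed Require Import complex.
Set Implicit Arguments.
Unset Strict Implicit.
Unset Printing Implicit Defensive.
Import GRing.Theory Num.Theory.
Local Open Scope ring_scope.

Section Defs.
Variable R : realType.
Variable D : nat.
Local Notation C := (R[i]).
Local Notation M := 'M[C]_D.

Definition adjmx (a : M) : M := (map_mx Num.conj a)^T.

Definition psd (a : M) : Prop :=
  adjmx a = a /\ forall v : 'rV[C]_D, 0 <= (v *m a *m (map_mx Num.conj v)^T) 0 0.

Definition pd (a : M) : Prop :=
  adjmx a = a /\ forall v : 'rV[C]_D, v != 0 -> 0 < (v *m a *m (map_mx Num.conj v)^T) 0 0.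

Definition unital_schwarz (phi : M -> M) : Prop :=
  linear phi /\ phi 1%:M = 1%:M /\
  forall a : M, psd (phi (adjmx a *m a) - adjmx (phi a) *m phi a).

Definition primitive (phi : M -> M) : Prop :=
  exists n : nat, forall x : M, psd x -> x != 0 -> pd (iter n phi x).

Definition mult_dom (psi : M -> M) (a : M) : Prop :=
  psi (adjmx a *m a) = adjmx (psi a) *m psi a /\
  psi (a *m adjmx a) = psi a *m adjmx (psi a).

(* k is kappa(phi): the minimal k in N = {0,1,2,...} such that
   \bigcap_n M_{phi^n} = M_{phi^k} *)
Definition is_kappa (phi : M -> M) (k : nat) : Prop :=
  (forall a, (forall n, mult_dom (iter n phi) a) <-> mult_dom (iter k phi) a) /\
  (forall j, (forall a, (forall n, mult_dom (iter n phi) a) <-> mult_dom (iter j phi) a)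
             -> (k <= j)%N).
End Defs.

(* Main.v *)
From mathcomp Require Import all_boot all_algebra.
From mathcomp Require Import reals.
From mathcomp.real_closed Require Import complex.
From mathcomp Require Import ring order.
Require Import Defs.
From Stdlib Require Import Classical Lia.
From mathcomp Require Import zify.
Import Order.TTheory GRing.Theory Num.Theory.
Local Open Scope ring_scope.
Set Implicit Arguments.
Unset Strict Implicit.
Unset Printing Implicit Defensive.



Section Stab.
Variable K : fieldType.
Variable vT : vectType K.

Definition subsp (P : vT -> Prop) :=
  P 0 /\ forall c u v, P u -> P v -> P (c *: u + v).

Lemma exists_vspace (P : vT -> Prop) : subsp P ->
  exists U : {vspace vT}, forall v, v \in U <-> P v.
Proof.
move=> [P0 Pc].
suff H : forall k (U : {vspace vT}), (forall v, v \in U -> P v) ->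
    (\dim (fullv : {vspace vT}) - \dim U <= k)%N ->
    exists U' : {vspace vT}, forall v, v \in U' <-> P v.
  apply: (H _ 0%VS); last exact: leqnn.
  by move=> v; rewrite memv0 => /eqP ->.
elim=> [|k IH] U HU Hd.
  exists U => v; split; first exact: HU.
  move=> Pv; have: (U == fullv)%VS.
    by rewrite eqEdim subvf /=; rewrite leqn0 subn_eq0 in Hd.
  by move/eqP => ->; rewrite memvf.
case: (classic (forall v, P v -> v \in U)) => [HP|].
  by exists U => v; split; [apply: HU | apply: HP].
move/not_all_ex_not => [w Hw].
have [Pw nw] : P w /\ w \notin U.
  split; first by apply: NNPP => H; apply: Hw => /H.
  by apply/negP => H; apply: Hw.
apply: (IH (U + <[w]>)%VS).
  move=> v /memv_addP [u uU [x /vlineP [c ->] ->]].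
  rewrite addrC; apply: Pc => //; exact: HU.
have sub : (U <= U + <[w]>)%VS by apply: addvSl.
have neq : (U != U + <[w]>)%VS.
  apply/negP => /eqP E; move/negP: nw; apply.
  rewrite E; apply/memv_addP; exists 0; first exact: mem0v.
  by exists w; [exact: memv_line | rewrite add0r].
have lt : (\dim U < \dim (U + <[w]>))%N.
  rewrite ltnNge; apply/negP => le; move/negP: neq; apply.
  by rewrite eqEdim sub le.
have le2 : (\dim (U + <[w]>) <= \dim (fullv : {vspace vT}))%N by apply: dimvS; apply: subvf.
move: Hd lt le2; set a := \dim U; set b := \dim (U + <[w]>)%VS; set f := \dim fullv.
move=> Hd lt le2.
lia.
Qed.

Lemma chain_stab (P : nat -> vT -> Prop) :
  (forall n, subsp (P n)) -> (forall n v, P n.+1 v -> P n v) ->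
  exists n, forall v, P n v -> P n.+1 v.
Proof.
move=> Hs Hd; apply: NNPP => Hn.
have Hn' : forall n, exists v, P n v /\ ~ P n.+1 v.
  move=> n; apply: NNPP => H; apply: Hn; exists n => v Pv.
  apply: NNPP => H'; apply: H; by exists v.
suff : forall n, exists U : {vspace vT}, (forall v, v \in U <-> P n v) /\
    (\dim U + n <= \dim (fullv : {vspace vT}))%N.
  move=> /(_ (\dim (fullv : {vspace vT})).+1) [U [_ H]].
  by move: H; rewrite addnS ltnNge leq_addl.
elim=> [|n [U [HU Hdim]]].
  have [U HU] := exists_vspace (Hs 0%N).
  by exists U; split => //; rewrite addn0; apply: dimvS; apply: subvf.
have [U' HU'] := exists_vspace (Hs n.+1).
exists U'; split => //.
have sub : (U' <= U)%VS.
  by apply/subvP => v /HU' /Hd /HU.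
have [w [Pw nPw]] := Hn' n.
have neq : U' != U.
  apply/negP => /eqP E; apply: nPw; apply/HU'; rewrite E; exact/HU.
have lt : (\dim U' < \dim U)%N.
  rewrite ltnNge; apply/negP => le; move/negP: neq; apply.
  by rewrite eqEdim sub le.
rewrite addnS; apply: leq_trans Hdim; by rewrite ltn_add2r.
Qed.

End Stab.

Section P1.
Variable R : realType.
Variable D : nat.
Local Notation C := (R[i]).
Local Notation M := 'M[C]_D.

Definition adj m n (A : 'M[C]_(m, n)) : 'M[C]_(n, m) := (map_mx Num.conj A)^T.

Lemma adjE m n (A : 'M[C]_(m, n)) i j : adj A i j = (A j i)^*.
Proof. by rewrite !mxE. Qed.

Lemma adjmxE (a : M) : adjmx a = adj a. Proof. by []. Qed.

Lemma adjK m n (A : 'M[C]_(m, n)) : adj (adj A) = A.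
Proof. by apply/matrixP => i j; rewrite !adjE conjCK. Qed.

Lemma adjM m n p (A : 'M[C]_(m, n)) (B : 'M[C]_(n, p)) :
  adj (A *m B) = adj B *m adj A.
Proof. by rewrite /adj map_mxM trmx_mul. Qed.

Lemma adjD m n (A B : 'M[C]_(m, n)) : adj (A + B) = adj A + adj B.
Proof. by apply/matrixP => i j; rewrite !mxE rmorphD. Qed.

Lemma adjN m n (A : 'M[C]_(m, n)) : adj (- A) = - adj A.
Proof. by apply/matrixP => i j; rewrite !mxE rmorphN. Qed.

Lemma adjB m n (A B : 'M[C]_(m, n)) : adj (A - B) = adj A - adj B.
Proof. by rewrite adjD adjN. Qed.

Lemma adjZ m n c (A : 'M[C]_(m, n)) : adj (c *: A) = c^* *: adj A.
Proof. by apply/matrixP => i j; rewrite !mxE rmorphM. Qed.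

Lemma adj0 m n : adj (0 : 'M[C]_(m, n)) = 0.
Proof. by apply/matrixP => i j; rewrite !mxE rmorph0. Qed.

Lemma adj1 : adj (1%:M : M) = 1%:M.
Proof. by apply/matrixP => i j; rewrite !mxE eq_sym rmorph_nat. Qed.

Definition bf (v w : 'rV[C]_D) (p : M) := (v *m p *m adj w) 0 0.
Definition qf v p := bf v v p.

Lemma psdE (a : M) : psd a <-> adj a = a /\ forall v, 0 <= qf v a.
Proof. by []. Qed.

Lemma bfDm v w p q : bf v w (p + q) = bf v w p + bf v w q.
Proof. by rewrite /bf mulmxDr mulmxDl mxE. Qed.
Lemma bfNm v w p : bf v w (- p) = - bf v w p.
Proof. by rewrite /bf mulmxN mulNmx mxE. Qed.
Lemma bfZm v w c p : bf v w (c *: p) = c * bf v w p.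
Proof. by rewrite /bf -scalemxAr -scalemxAl mxE. Qed.
Lemma bf0m v w : bf v w 0 = 0.
Proof. by rewrite /bf mulmx0 mul0mx mxE. Qed.

Lemma bf_exp v w c p :
  qf (v + c *: w) p = qf v p + c^* * bf v w p + c * bf w v p + c * c^* * qf w p.
Proof.
rewrite /qf /bf adjD adjZ !mulmxDl !mulmxDr -!scalemxAl -!scalemxAr !mxE.
ring.
Qed.

Lemma adj_delta_row (j : 'I_D) : adj (delta_mx 0 j : 'rV[C]_D) = delta_mx j 0.
Proof.
apply/matrixP => i k; rewrite !mxE rmorph_nat andbC.
by rewrite (ord1 k) !eqxx.
Qed.

Lemma bf_delta (i j : 'I_D) p : bf (delta_mx 0 i) (delta_mx 0 j) p = p i j.
Proof.
by rewrite /bf adj_delta_row -rowE -colE !mxE.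
Qed.

Lemma form_zero (p : M) : (forall v, qf v p = 0) -> p = 0.
Proof.
move=> H; apply/matrixP => i j; rewrite mxE.
have Hii k : p k k = 0 by rewrite -bf_delta; apply: H.
have H1 := H (delta_mx 0 i + 1 *: delta_mx 0 j).
have H2 := H (delta_mx 0 i + 'i *: delta_mx 0 j).
rewrite bf_exp /qf !bf_delta !Hii in H1.
rewrite bf_exp /qf !bf_delta !Hii in H2.
rewrite conjC1 in H1.
have E1 : p i j + p j i = 0 by rewrite -H1; ring.
have Ci : ('i : C)^* = - 'i by rewrite conjCi.
rewrite Ci in H2.
have E2 : 'i * (p j i - p i j) = 0 by rewrite -H2; ring.
move/eqP: E2; rewrite mulf_eq0 (negbTE (neq0Ci _)) /= subr_eq0 => /eqP E2.
rewrite E2 in E1.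
have : (2%:R : C) * p i j = 0 by rewrite -E1; ring.
by move/eqP; rewrite mulf_eq0 pnatr_eq0 /= => /eqP.
Qed.

Lemma psd0 : psd (0 : M).
Proof. by split; [rewrite adjmxE adj0 | move=> v; rewrite mulmx0 mul0mx mxE]. Qed.

Lemma psdD (p q : M) : psd p -> psd q -> psd (p + q).
Proof.
move=> [Hp Qp] [Hq Qq]; split; first by rewrite adjmxE adjD -!adjmxE Hp Hq.
move=> v; have := bfDm v v p q; rewrite /bf => ->.
by rewrite addr_ge0 ?Qp ?Qq.
Qed.

Lemma qf_sq (v : 'rV[C]_D) m (c : 'M[C]_(m, D)) : 0 <= qf v (adj c *m c).
Proof.
rewrite /qf /bf mulmxA -mulmxA.
have -> : c *m adj v = adj (v *m adj c) by rewrite adjM adjK.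
set u := v *m adj c.
rewrite mxE sumr_ge0 // => k _; rewrite adjE; apply: mul_conjC_ge0.
Qed.

Lemma psd_sq m (c : 'M[C]_(m, D)) : psd (adj c *m c).
Proof.
split; first by rewrite adjmxE adjM adjK.
by move=> v; apply: qf_sq.
Qed.

Lemma psd_sum0 (p q : M) : psd p -> psd q -> p + q = 0 -> p = 0.
Proof.
move=> [_ Qp] [_ Qq] E; apply: form_zero => v.
have Ep : q = - p by apply/eqP; rewrite -addr_eq0 addrC E.
have h1 : 0 <= qf v p by apply: Qp.
have h2 : 0 <= qf v q by apply: Qq.
rewrite Ep /qf bfNm oppr_ge0 in h2.
by apply/eqP; rewrite eq_le h2 h1.
Qed.

Lemma psd_factor (x : M) : psd x -> exists b : M, x = adj b *m b.
Proof.
move=> [Hx Qx].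
have herm : x \is hermsymmx.
  apply/is_hermitianmxP; rewrite expr0 scale1r.
  apply/matrixP => i j; rewrite -[in LHS]Hx !mxE.
  by [].
have /orthomx_spectralP Ex := hermitian_normalmx herm.
set P := spectralmx x in Ex; set d := spectral_diag x in Ex.
have Pu : P \is unitarymx := spectral_unitarymx x.
have adjP : invmx P = adj P.
  rewrite invmx_unitary //; apply/matrixP => i j; rewrite !mxE; by [].
have PP : P *m adj P = 1%:M.
  move/unitarymxP: Pu => <-; congr (_ *m _); apply/matrixP => i j; rewrite !mxE; by [].
rewrite adjP in Ex.
have dge0 i : 0 <= d 0 i.
  have : 0 <= qf (delta_mx 0 i *m P) x by exact: Qx.
  rewrite /qf /bf adjM Ex !mulmxA -(mulmxA _ P (adj P)) PP mulmx1.
  rewrite -(mulmxA _ P (adj P)) PP mulmx1 -rowE row_diag_mx adj_delta_row.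
  by rewrite -scalemxAl mul_delta_mx !mxE !eqxx mulr1.
exists (diag_mx (map_mx sqrtC d) *m P).
rewrite {1}Ex adjM -!mulmxA; congr (_ *m _); rewrite !mulmxA; congr (_ *m _).
apply/matrixP => i j; rewrite mul_mx_diag !mxE.
case: (i =P j) => [<-|/eqP ne]; last by rewrite eq_sym (negbTE ne) !mulr0n rmorph0 mul0r.
rewrite eqxx !mulr1n geC0_conj ?sqrtC_ge0 //.
by rewrite -expr2 sqrtCK.
Qed.

Section Lin.
Variable psi : M -> M.
Hypothesis L : linear psi.
Lemma linD u v : psi (u + v) = psi u + psi v.
Proof. by have := L 1 u v; rewrite !scale1r. Qed.
Lemma lin0 : psi 0 = 0.
Proof. by apply: (addrI (psi 0)); rewrite -linD !addr0. Qed.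
Lemma linZ c u : psi (c *: u) = c *: psi u.
Proof. by have := L c u 0; rewrite !addr0 lin0 addr0. Qed.
Lemma linN u : psi (- u) = - psi u.
Proof. by rewrite -scaleN1r linZ scaleN1r. Qed.
Lemma linB u v : psi (u - v) = psi u - psi v.
Proof. by rewrite linD linN. Qed.
End Lin.

Definition Dl (psi : M -> M) (a : M) := psi (adj a *m a) - adj (psi a) *m psi a.

Lemma SL (psi : M -> M) : unital_schwarz psi -> linear psi.
Proof. by case. Qed.
Lemma S1 (psi : M -> M) : unital_schwarz psi -> psi 1%:M = 1%:M.
Proof. by case=> _ []. Qed.
Lemma SD (psi : M -> M) : unital_schwarz psi -> forall a, psd (Dl psi a).
Proof. by case=> _ []. Qed.

Lemma Spos (psi : M -> M) : unital_schwarz psi -> forall x, psd x -> psd (psi x).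
Proof.
move=> Hs x /psd_factor [b ->].
have -> : psi (adj b *m b) = Dl psi b + adj (psi b) *m psi b by rewrite /Dl subrK.
by apply: psdD; [apply: SD | apply: psd_sq].
Qed.

Lemma Sherm_sq (psi : M -> M) : unital_schwarz psi -> forall c : M,
  adj (psi (adj c *m c)) = psi (adj c *m c).
Proof. by move=> Hs c; have [] := Spos Hs (psd_sq c). Qed.

Lemma scal_aux (x y z t : C) : x + y = z + t -> - 'i * (x - y) = 'i * (z - t) -> x = t.
Proof.
move=> H1 H2.
have ii : 'i * 'i = -1 :> C by rewrite -expr2 sqrCi.
have h3 : x - y = t - z.
  have e1 : 'i * (- 'i * (x - y)) = - ('i * 'i) * (x - y) by ring.
  have e2 : 'i * ('i * (z - t)) = ('i * 'i) * (z - t) by ring.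
  have := congr1 ( *%R 'i) H2; rewrite /= e1 e2 ii => h.
  by transitivity (- (-1) * (x - y)); [ring | rewrite h; ring].
have two : (2%:R : C) != 0 by rewrite pnatr_eq0.
apply: (mulfI two); transitivity ((x + y) + (x - y)); first ring.
by rewrite H1 h3; ring.
Qed.

Lemma Sstar (psi : M -> M) : unital_schwarz psi -> forall a, adj (psi a) = psi (adj a).
Proof.
move=> Hs a; have L := SL Hs.
set u := psi a; set w := psi (adj a).
have E1 : adj (1%:M + a) *m (1%:M + a) = 1%:M + a + adj a + adj a *m a.
  by rewrite adjD adj1 !mulmxDl !mulmxDr !mul1mx mulmx1 !addrA.
have E2 : adj (1%:M + 'i *: a) *m (1%:M + 'i *: a)
    = 1%:M + 'i *: a - 'i *: adj a + adj a *m a.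
  rewrite adjD adj1 adjZ !mulmxDl !mulmxDr !mul1mx mulmx1 conjCi.
  rewrite -!scalemxAl -!scalemxAr scalerA mulNr -expr2 sqrCi opprK scale1r.
  by rewrite scaleNr !addrA.
have H1 := Sherm_sq Hs (1%:M + a).
have H2 := Sherm_sq Hs (1%:M + 'i *: a).
have H0 := Sherm_sq Hs a.
rewrite E1 !(linD L) (S1 Hs) in H1.
rewrite E2 !(linD L) (linN L) !(linZ L) (S1 Hs) in H2.
rewrite !adjD adj1 H0 in H1.
rewrite !adjD adjN !adjZ adj1 H0 conjCi in H2.
move/addIr: H1; rewrite -!addrA => /addrI; rewrite -/u -/w => H1.
move/addIr: H2; rewrite -!addrA => /addrI; rewrite -/u -/w => H2.
have H2' : - 'i *: (adj u - adj w) = 'i *: (u - w) by rewrite !scalerBr -H2.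
apply/matrixP => p q.
have h1 := congr1 (fun m : M => m p q) H1.
have h2 := congr1 (fun m : M => m p q) H2'.
rewrite /= !mxE in h1 h2.
rewrite adjE; exact: (scal_aux h1 h2).
Qed.

Lemma Dl_comp (psi1 psi2 : M -> M) : linear psi2 -> forall a,
  Dl (fun x => psi2 (psi1 x)) a = psi2 (Dl psi1 a) + Dl psi2 (psi1 a).
Proof. by move=> L2 a; rewrite /Dl (linB L2) addrA subrK. Qed.

Lemma S_comp (psi1 psi2 : M -> M) : unital_schwarz psi1 -> unital_schwarz psi2 ->
  unital_schwarz (fun x => psi2 (psi1 x)).
Proof.
move=> H1 H2; split; first by move=> c u v; rewrite (SL H1) (SL H2).
split; first by rewrite (S1 H1) (S1 H2).
move=> a; have := Dl_comp psi1 (SL H2) a; rewrite /Dl => ->.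
by apply: psdD; [apply: (Spos H2); apply: SD | apply: SD].
Qed.

Lemma S_id : unital_schwarz (fun x : M => x).
Proof.
split; first by [].
split; first by [].
by move=> a; rewrite -/(Dl (fun x => x) a) /Dl subrr; apply: psd0.
Qed.

Lemma S_ext (f g : M -> M) : f =1 g -> unital_schwarz f -> unital_schwarz g.
Proof.
move=> E [L [U P]]; split; first by move=> c u v; rewrite -!E L.
split; first by rewrite -E.
by move=> a; rewrite -!E; apply: P.
Qed.

Definition faithful (psi : M -> M) := forall x, psd x -> psi x = 0 -> x = 0.

Lemma faithful_comp (psi1 psi2 : M -> M) : unital_schwarz psi1 ->
  faithful psi1 -> faithful psi2 -> faithful (fun x => psi2 (psi1 x)).
Proof.
move=> H1 F1 F2 x Px E; apply: F1 => //; apply: F2 => //; exact: Spos.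
Qed.

Lemma Mdom_char (psi : M -> M) : unital_schwarz psi -> forall a,
  mult_dom psi a <-> Dl psi a = 0 /\ Dl psi (adj a) = 0.
Proof.
move=> Hs a; rewrite /mult_dom !adjmxE /Dl adjK -(Sstar Hs a) adjK.
split => [[-> ->]|[/subr0_eq -> /subr0_eq ->]]; by rewrite ?subrr.
Qed.

Lemma Dl_key (psi1 psi2 : M -> M) : unital_schwarz psi1 -> unital_schwarz psi2 ->
  faithful psi2 -> forall a,
  Dl (fun x => psi2 (psi1 x)) a = 0 <-> Dl psi1 a = 0 /\ Dl psi2 (psi1 a) = 0.
Proof.
move=> H1 H2 F2 a; rewrite (Dl_comp psi1 (SL H2)); split.
  move=> E.
  have P1 : psd (psi2 (Dl psi1 a)) by apply: (Spos H2); apply: SD.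
  have P2 : psd (Dl psi2 (psi1 a)) by apply: SD.
  have E1 := psd_sum0 P1 P2 E.
  split; first by apply: F2 => //; apply: SD.
  by rewrite E1 add0r in E.
by move=> [-> ->]; rewrite (lin0 (SL H2)) addr0.
Qed.

Lemma Mdom_key (psi1 psi2 : M -> M) : unital_schwarz psi1 -> unital_schwarz psi2 ->
  faithful psi2 -> forall a,
  mult_dom (fun x => psi2 (psi1 x)) a <-> mult_dom psi1 a /\ mult_dom psi2 (psi1 a).
Proof.
move=> H1 H2 F2 a.
rewrite (Mdom_char (S_comp H1 H2)) (Mdom_char H1) (Mdom_char H2).
rewrite !(Dl_key H1 H2 F2) (Sstar H1).
tauto.
Qed.

Lemma Mdom_ext (f g : M -> M) : f =1 g -> forall a, mult_dom f a <-> mult_dom g a.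
Proof. by move=> E a; rewrite /mult_dom !E. Qed.

Definition Phi (psi : M -> M) (x y : M) := psi (adj x *m y) - adj (psi x) *m psi y.

Lemma mul_exp (A B X Y : M) c t :
  (A + c *: B) *m (X + t *: Y) = A *m X + t *: (A *m Y) + c *: (B *m X) + (c * t) *: (B *m Y).
Proof.
by rewrite mulmxDl !mulmxDr -!scalemxAl -!scalemxAr scalerA !addrA.
Qed.

Lemma lmod_aux (a b c d a' b' c' d' : M) (t1 t2 t3 : C) :
  (a + t1 *: b + t2 *: c + t3 *: d) - (a' + t1 *: b' + t2 *: c' + t3 *: d')
  = (a - a') + t1 *: (b - b') + t2 *: (c - c') + t3 *: (d - d').
Proof. by apply/matrixP => i j; rewrite !mxE; ring. Qed.

Lemma Dl_exp (psi : M -> M) : linear psi -> forall x y t,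
  Dl psi (x + t *: y) = Dl psi x + t *: Phi psi x y + t^* *: Phi psi y x
     + (t^* * t) *: Dl psi y.
Proof.
move=> L x y t; rewrite /Dl /Phi (linD L) (linZ L) !adjD !adjZ !mul_exp.
rewrite !(linD L) !(linZ L); exact: lmod_aux.
Qed.

Lemma real_aux (s g : C) : 0 <= g ->
  (forall r : C, r \is Num.real -> 0 <= r * s + r ^+ 2 * g) -> s = 0.
Proof.
move=> g0 H.
have g1 : 0 < 1 + g by apply: (lt_le_trans ltr01); rewrite lerDl.
have g1n : 1 + g != 0 by rewrite gt_eqF.
have sr : s \is Num.real.
  have := H 1 (rpred1 _); rewrite mul1r expr1n mul1r => /ger0_real hr.
  have -> : s = (s + g) - g by ring.
  by apply: rpredB => //; apply: ger0_real.
have rr : - s / (1 + g) \is Num.real.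
  by rewrite rpredM ?rpredN ?rpredV // ger0_real // ltW.
have := H _ rr.
have -> : - s / (1 + g) * s + (- s / (1 + g)) ^+ 2 * g = - (s ^+ 2 / (1 + g) ^+ 2).
  by field.
rewrite oppr_ge0 => hle.
have hge : 0 <= s ^+ 2 / (1 + g) ^+ 2.
  by apply: divr_ge0; [rewrite -realEsqr | apply: exprn_ge0; apply: ltW].
have : s ^+ 2 / (1 + g) ^+ 2 = 0 by apply/eqP; rewrite eq_le hle hge.
move/eqP; rewrite mulf_eq0 invr_eq0 !expf_eq0 /= (negbTE g1n) orbF.
by move/eqP.
Qed.

Lemma scal_CS (al be ga : C) : 0 <= ga ->
  (forall t : C, 0 <= t * al + t^* * be + t^* * t * ga) -> al = 0 /\ be = 0.
Proof.
move=> g0 H.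
have H1 : al + be = 0.
  apply: (real_aux g0) => r rr; have := H r.
  by rewrite (CrealP rr) expr2; congr (0 <= _); ring.
have H2 : 'i * (al - be) = 0.
  apply: (real_aux g0) => r rr; have := H ('i * r).
  have c1 : ('i * r)^* = - 'i * r.
    have -> : ('i * r)^* = ('i)^* * r^* by apply: rmorphM.
    by rewrite conjCi (CrealP rr).
  rewrite c1.
  have ii : 'i * 'i = -1 :> C by rewrite -expr2 sqrCi.
  have -> : (- 'i * r * ('i * r)) = r ^+ 2 by rewrite expr2 -[RHS]mul1r -[1]opprK -ii; ring.
  by congr (0 <= _); ring.
move/eqP: H2; rewrite mulf_eq0 (negbTE (neq0Ci _)) /= subr_eq0 => /eqP E.
rewrite E in H1 *.
have two : (2%:R : C) != 0 by rewrite pnatr_eq0.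
have : 2%:R * be = 0 by rewrite -H1; ring.
by move/eqP; rewrite mulf_eq0 (negbTE two) /= => /eqP.
Qed.

Lemma qfD v (p q : M) : qf v (p + q) = qf v p + qf v q.
Proof. exact: bfDm. Qed.
Lemma qfZ v c (p : M) : qf v (c *: p) = c * qf v p.
Proof. exact: bfZm. Qed.

Lemma qf3 v (B C' E : M) t1 t2 t3 :
  qf v (t1 *: B + t2 *: C' + t3 *: E) = t1 * qf v B + t2 * qf v C' + t3 * qf v E.
Proof. by rewrite !qfD !qfZ. Qed.

Lemma CS (psi : M -> M) : unital_schwarz psi -> forall u, Dl psi u = 0 ->
  forall y, Phi psi u y = 0 /\ Phi psi y u = 0.
Proof.
move=> Hs u Hu y.
have key : forall v, qf v (Phi psi u y) = 0 /\ qf v (Phi psi y u) = 0.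
  move=> v; apply: (scal_CS (ga := qf v (Dl psi y))).
    by have [_ ] := SD Hs y; apply.
  move=> t; have [_ Q] := SD Hs (u + t *: y).
  have : 0 <= qf v (Dl psi (u + t *: y)) by exact: Q.
  by rewrite (Dl_exp (SL Hs)) Hu add0r qf3.
by split; apply: form_zero => v; have [] := key v.
Qed.

Lemma Z_closed (psi : M -> M) : unital_schwarz psi -> forall c u v,
  Dl psi u = 0 -> Dl psi v = 0 -> Dl psi (c *: u + v) = 0.
Proof.
move=> Hs c u v Hu Hv; rewrite addrC (Dl_exp (SL Hs)) Hv Hu.
have [h1 h2] := CS Hs Hu v.
by rewrite h1 h2 !scaler0 !addr0.
Qed.

Lemma Mdom_closed (psi : M -> M) : unital_schwarz psi -> forall c u v,
  mult_dom psi u -> mult_dom psi v -> mult_dom psi (c *: u + v).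
Proof.
move=> Hs c u v; rewrite !(Mdom_char Hs) => [[u1 u2] [v1 v2]]; split.
  exact: Z_closed.
by rewrite adjD adjZ; apply: Z_closed.
Qed.

Section Phi.
Variable phi : M -> M.
Hypothesis Hs : unital_schwarz phi.
Hypothesis Hp : primitive phi.

Lemma S_iter n : unital_schwarz (iter n phi).
Proof. elim: n => [|n IH]; [exact: S_id | exact: (S_comp IH Hs)]. Qed.

Lemma adj_delta_sq (i : 'I_D) : adj (delta_mx i i : M) = delta_mx i i.
Proof.
by apply/matrixP => p q; rewrite !mxE rmorph_nat andbC.
Qed.

Lemma faithful_phi : faithful phi.
Proof.
move=> x Px Ex; case: (eqVneq x 0) => // nx; exfalso.
have [i _] : exists i : 'I_D, True.
  case: (pickP (@predT 'I_D)) => [i _|h]; first by exists i.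
  by exfalso; move/eqP: nx; apply; apply/matrixP => i0 j0; have := h i0.
have nzd : forall j : 'I_D, (delta_mx 0 j : 'rV[C]_D) != 0.
  move=> j; apply/negP => /eqP /matrixP /(_ 0 j); rewrite !mxE !eqxx /=.
  by move/eqP; rewrite oner_eq0.
have [m Hm] := Hp.
case: m Hm => [|m] Hm.
  case: (pickP (fun j : 'I_D => j != i)) => [j ji|h].
    have Pd : psd (delta_mx i i : M).
      have -> : (delta_mx i i : M) = adj (delta_mx i i : M) *m delta_mx i i by rewrite adj_delta_sq mul_delta_mx.
      exact: psd_sq.
    have nd : (delta_mx i i : M) != 0.
      apply/negP => /eqP /matrixP /(_ i i); rewrite !mxE !eqxx /=.
      by move/eqP; rewrite oner_eq0.
    have [_ Q] := Hm _ Pd nd.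
    have := Q _ (nzd j); rewrite -/(bf _ _ _) bf_delta mxE (negbTE ji) andbF /=.
    by rewrite ltxx.
  move/eqP: nx; apply; rewrite -Ex.
  have E1 : x = x i i *: 1%:M.
    apply/matrixP => p q; rewrite !mxE.
    have /negbFE/eqP -> := h p; have /negbFE/eqP -> := h q.
    by rewrite eqxx mulr1.
  by rewrite {2}E1 (linZ (SL Hs)) (S1 Hs) -E1.
have := Hm x Px nx; rewrite iterSr Ex (lin0 (SL (@S_iter m))).
move=> [_ Q]; have := Q _ (nzd i); rewrite -/(bf _ _ _) /bf mulmx0 mul0mx mxE.
by rewrite ltxx.
Qed.

Lemma faithful_iter n : faithful (iter n phi).
Proof.
elim: n => [|n IH]; first by move=> x _.
exact: (faithful_comp (@S_iter n) IH faithful_phi).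
Qed.

Definition Mk n a := mult_dom (iter n phi) a.

Lemma Mk_succ n a : Mk n.+1 a <-> Mk 1 a /\ Mk n (phi a).
Proof.
rewrite /Mk (Mdom_ext (g := fun x => iter n phi (phi x)) (fun x => iterSr n phi x)).
exact (Mdom_key Hs (@S_iter n) (@faithful_iter n) a).
Qed.

Lemma Mk0 a : Mk 0 a.
Proof. by split. Qed.

Lemma Mk_anti n a : Mk n.+1 a -> Mk n a.
Proof.
elim: n a => [|n IH] a; first by move=> _; apply: Mk0.
move=> /Mk_succ [h1 h2]; apply/Mk_succ; split => //; exact: IH.
Qed.

Lemma Mk_antiL m n a : (m <= n)%N -> Mk n a -> Mk m a.
Proof.
move=> /subnK <-; elim: (n - m)%N => [|k IH] //= H.
by apply: IH; apply: Mk_anti; rewrite addSn in H.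
Qed.

Lemma Mk_stab_step n : (forall a, Mk n a <-> Mk n.+1 a) ->
  forall a, Mk n.+1 a <-> Mk n.+2 a.
Proof.
move=> H a; rewrite (Mk_succ n.+1) (Mk_succ n) (H (phi a)); tauto.
Qed.

Lemma Mk_stab n : (forall a, Mk n a <-> Mk n.+1 a) ->
  forall m, (n <= m)%N -> forall a, Mk m a <-> Mk n a.
Proof.
move=> H m /subnK <-; elim: (m - n)%N => [|k IH] a //=.
have Hk : forall a, Mk (k + n) a <-> Mk (k + n).+1 a.
  elim: k {IH} => [|k IHk] //=; exact: Mk_stab_step.
by rewrite addSn -Hk.
Qed.

Lemma Mk_closed n : subsp (Mk n).
Proof.
elim: n => [|n IH].
  by split; [apply: Mk0 | move=> *; apply: Mk0].
split.
  apply/Mk_succ; split; first by apply/(Mdom_char Hs); rewrite /Dl adj0 mul0mx mulmx0 (lin0 (SL Hs)) adj0 mul0mx subr0.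
  by rewrite (lin0 (SL Hs)); case: IH.
move=> c u v /Mk_succ [u1 u2] /Mk_succ [v1 v2]; apply/Mk_succ; split.
  exact: (Mdom_closed Hs).
by rewrite (linD (SL Hs)) (linZ (SL Hs)); case: IH => _; apply.
Qed.

End Phi.

End P1.

Lemma ex_min (Q : nat -> Prop) n : Q n -> exists k, Q k /\ forall j, Q j -> (k <= j)%N.
Proof.
elim: n {-2}n (leqnn n) => [|N IH] n le Qn.
  by exists n; split => // j _; move: le; rewrite leqn0 => /eqP ->.
case: (classic (exists j, (j < n)%N /\ Q j)) => [[j [lt Qj]]|nex].
  by apply: (IH j) => //; rewrite -ltnS; apply: leq_trans lt le.
exists n; split => // j Qj; rewrite leqNgt; apply/negP => lt; apply: nex; by exists j.
Qed.

Theorem lemma3p7 (R : realType) (D : nat) (phi : 'M[R[i]]_D -> 'M[R[i]]_D) (n : nat) :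
  unital_schwarz phi -> primitive phi ->
  (exists k, is_kappa phi k) /\
  (forall k, is_kappa phi k ->
     ((forall a, mult_dom (iter n phi) a <-> mult_dom (iter n.+1 phi) a) <-> (k <= n)%N)).
Proof.
move=> Hs Hp.
have eqI : forall n, (forall a, Mk phi n a <-> Mk phi n.+1 a) ->
    forall a, (forall m, Mk phi m a) <-> Mk phi n a.
  move=> N H a; split; first by move=> h; apply: h.
  move=> h m; case: (leqP m N) => [le|lt]; first exact: (Mk_antiL Hs Hp le h).
  by apply/(Mk_stab Hs Hp H (ltnW lt)).
have [n0 Hn0] : exists n0, forall a, Mk phi n0 a <-> Mk phi n0.+1 a.
  have [n0 H] := chain_stab (Mk_closed Hs Hp) (fun N a => @Mk_anti _ _ _ Hs Hp N a).
  by exists n0 => a; split; [apply: H | apply: Mk_anti].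
split.
  have [k [Qk Hk]] := @ex_min (fun j => forall a, (forall m, Mk phi m a) <-> Mk phi j a) n0 (eqI n0 Hn0).
  by exists k; split.
move=> k [Hk Hmin]; split.
  by move=> H; apply: Hmin; exact: (eqI n H).
move=> le a; split; last exact: (Mk_anti Hs Hp).
move=> h; have hk : Mk phi k a := Mk_antiL Hs Hp le h.
by have := (Hk a).2 hk; apply.
Qed.
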